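(* Let $\Gamma=M\mathbb{Z}^n$ be a lattice in $\mathbb{R}^n$ (or $\mathbb{C}^n$), where $M$ is an invertible real (or complex) $n\times n$ matrix, and let $A$ be a dilation matrix for $\Gamma$. Let $F_\Gamma=M([-\tfrac12,\tfrac12)^n)$ and $D=A(F_\Gamma)\cap\Gamma$. Then there exists a finite set $S\subset\Gamma$ such that every $x\in\Gamma$ satisfies exactly one of: (1) $x=\sum_{j=0}^{N}A^jd_j$ for some $N\ge0$ and $d_j\in D$; (2) $x=A^Ns+\sum_{j=0}^{N-1}A^jd_j$ for some $N\ge0$, $s\in S$, $d_j\in D$.
   Context: An integer dilation matrix is an $n\times n$ matrix with integer entries all of whose eigenvalues $\lambda$ satisfy $|\lambda|>1$. A matrix $A$ is a dilation matrix for $\Gamma=M\mathbb{Z}^n$ if $B=M^{-1}AM$ is an integer dilation matrix (so $A$ maps $\Gamma$ into itself with nontrivial cokernel). *)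

(* Defs.v *)
From HB Require Import structures.
From mathcomp Require Import all_boot all_order all_algebra all_field.
Set Implicit Arguments. Unset Strict Implicit. Unset Printing Implicit Defensive.
Import Order.TTheory GRing.Theory Num.Theory.
Local Open Scope ring_scope.

(* Integer dilation matrix: integer entries, every (complex) eigenvalue
   lambda satisfies |lambda| > 1.  Eigenvalues are taken in algC
   (the algebraic complex numbers), which contains all eigenvalues of
   an integer matrix. *)
Definition int_dilation (n : nat) (B : 'M[int]_n) : Prop :=
  forall lam : algC, eigenvalue (map_mx intr B) lam -> 1 < `|lam|.

Definition in_lattice (K : numFieldType) (n : nat) (M : 'M[K]_n)
  (x : 'cV[K]_n) : Prop :=
  exists z : 'cV[int]_n, x = M *m map_mx intr z.

Definition dilation_for (K : numFieldType) (n : nat) (M A : 'M[K]_n) : Prop :=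
  exists B : 'M[int]_n, int_dilation B /\ invmx M *m A *m M = map_mx intr B.

Definition in_fund_domain (K : numFieldType) (n : nat) (M : 'M[K]_n)
  (y : 'cV[K]_n) : Prop :=
  exists c : 'cV[K]_n,
    (forall i, - (2%:R)^-1 <= c i 0 /\ c i 0 < (2%:R)^-1) /\ y = M *m c.

Definition in_digits (K : numFieldType) (n : nat) (M A : 'M[K]_n)
  (d : 'cV[K]_n) : Prop :=
  in_lattice M d /\ exists y, in_fund_domain M y /\ d = A *m y.

Definition expansion1 (K : numFieldType) (n : nat) (M A : 'M[K]_n)
  (x : 'cV[K]_n) : Prop :=
  exists (N : nat) (d : 'I_N.+1 -> 'cV[K]_n),
    (forall j, in_digits M A (d j)) /\
    x = \sum_(j < N.+1) (A ^+ j *m d j).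

Definition expansion2 (K : numFieldType) (n : nat) (M A : 'M[K]_n)
  (S : seq 'cV[K]_n) (x : 'cV[K]_n) : Prop :=
  exists (N : nat) (s : 'cV[K]_n) (d : 'I_N -> 'cV[K]_n),
    s \in S /\ (forall j, in_digits M A (d j)) /\
    x = A ^+ N *m s + \sum_(j < N) (A ^+ j *m d j).

(* Main.v *)
Require Import Defs.
From HB Require Import structures.
From mathcomp Require Import all_boot all_order all_algebra all_field.
From Stdlib Require Import Classical.
Import Order.TTheory GRing.Theory Num.Theory.
Set Implicit Arguments. Unset Strict Implicit. Unset Printing Implicit Defensive.
Local Open Scope ring_scope.
Lemma filter_exists (T : eqType) (s : seq T) (Q : T -> Prop) :
  exists S : seq T, forall x, x \in S <-> (x \in s /\ Q x).
Proof.
elim: s => [|a s [S HS]]; first by exists [::] => x; split => //; case.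
case: (classic (Q a)) => Qa.
  exists (a :: S) => x; rewrite !in_cons; split.
    case/orP => [/eqP -> | /HS [] xs Qx]; first by rewrite eqxx.
    by rewrite xs orbT.
  case=> /orP [/eqP ->|xs Qx]; first by rewrite eqxx.
  by apply/orP; right; apply/HS.
exists S => x; rewrite in_cons; split.
  by move/HS => [xs Qx]; rewrite xs orbT.
case=> /orP [/eqP -> //|xs Qx]; by apply/HS.
Qed.

Section Dyn.
Variable T : eqType.
Variable Phi : T -> T.
Variable z0 : T.
Hypothesis Phi0 : Phi z0 = z0.
Hypothesis orbit_fin : forall z, exists s : seq T, forall k, iter k Phi z \in s.
Hypothesis per_fin : exists P : seq T, forall p m, (0 < m)%N -> iter m Phi p = p -> p \in P.

Lemma iter_z0 k : iter k Phi z0 = z0.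
Proof. by elim: k => //= k ->; rewrite Phi0. Qed.

Lemma eventually_periodic z : exists i m, (0 < m)%N /\ iter m Phi (iter i Phi z) = iter i Phi z.
Proof.
have [s Hs] := orbit_fin z.
apply: NNPP => Hn.
have Hinj : {in iota 0 (size s).+1 &, injective (fun k => iter k Phi z)}.
  move=> i j _ _ Hij; apply: NNPP => Hne.
  apply: Hn; wlog lt_ij : i j Hij Hne / (i < j)%N.
    move=> W; case: (ltngtP i j) => [h|h|h]; first exact: (W i j).
    - by apply: (W j i) => // E; apply: Hne.
    - by case: Hne.
  exists i, (j - i)%N; split; first by rewrite subn_gt0.
  by rewrite -iterD subnK ?(ltnW lt_ij).
have := uniq_leq_size (s1 := [seq iter k Phi z | k <- iota 0 (size s).+1]) (s2 := s).
rewrite map_inj_in_uniq // iota_uniq size_map size_iota ltnn => H.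
have : false; last by [].
apply: H => // x /mapP [k _ ->]; exact: Hs.
Qed.

Theorem dyn_main : exists S : seq T, forall z,
  ((exists N, iter N.+1 Phi z = z0) /\ ~ (exists N, iter N Phi z \in S)) \/
  (~ (exists N, iter N.+1 Phi z = z0) /\ (exists N, iter N Phi z \in S)).
Proof.
have [P HP] := per_fin.
have [S HS] := filter_exists P (fun p => p != z0 /\ exists m, (0 < m)%N /\ iter m Phi p = p).
exists S => z.
case: (classic (exists N, iter N.+1 Phi z = z0)) => H0; [left|right]; split => //.
  case: H0 => N HN [N' /HS [_ [pn [m [m0 Hm]]]]].
  have Hk k : iter (m * k + N') Phi z = iter N' Phi z.
    elim: k => [|k IH]; first by rewrite muln0.
    by rewrite mulnS -addnA iterD IH Hm.
  have Hbig j : iter (j + N.+1) Phi z = z0 by rewrite iterD HN iter_z0.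
  move: (Hk N.+1); rewrite -(subnK (_ : N.+1 <= m * N.+1 + N')%N).
    by rewrite Hbig => E; rewrite -E eqxx in pn.
  by rewrite (leq_trans _ (leq_addr _ _)) // leq_pmull.
have [i [m [m0 Hm]]] := eventually_periodic z.
exists i; apply/HS; split; first exact: HP Hm.
split; last by exists m.
apply/eqP => E; apply: H0; exists i; by rewrite iterS E Phi0.
Qed.
End Dyn.

Section Exp.
Variables (n : nat) (B : 'M[int]_n) (D : 'cV[int]_n -> Prop).
Variables (dig Phi : 'cV[int]_n -> 'cV[int]_n).
Hypothesis Hdec : forall z, D (dig z) /\ z = dig z + B *m Phi z.
Hypothesis Huniq : forall e e' w w', D e -> D e' -> e + B *m w = e' + B *m w' -> w = w'.

Lemma sum_shift N (d : 'I_N.+1 -> 'cV[int]_n) (w : 'cV[int]_n) :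
  \sum_(j < N.+1) B ^+ j *m d j + B ^+ N.+1 *m w =
  d ord0 + B *m (\sum_(j < N) B ^+ j *m d (lift ord0 j) + B ^+ N *m w).
Proof.
rewrite big_ord_recl expr0 mul1mx -addrA mulmxDr; congr (_ + _).
rewrite mulmx_sumr exprS -mulmxE -mulmxA; congr (_ + _).
by apply: eq_bigr => i _; rewrite exprS -mulmxE mulmxA.
Qed.

Lemma exp_unique N : forall z (d : 'I_N -> 'cV[int]_n) w, (forall j, D (d j)) ->
  z = \sum_(j < N) B ^+ j *m d j + B ^+ N *m w -> w = iter N Phi z.
Proof.
elim: N => [|N IH] z d w Hd Hz.
  by rewrite Hz big_ord0 add0r expr0 mul1mx.
rewrite iterSr; apply: (IH _ (fun j => d (lift ord0 j))) => // .
have [Hdz Ez] := Hdec z.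
apply: (Huniq Hdz (Hd ord0)); by rewrite -Ez -sum_shift.
Qed.

Lemma exp_exists N z : exists d : 'I_N -> 'cV[int]_n, (forall j, D (d j)) /\
  z = \sum_(j < N) B ^+ j *m d j + B ^+ N *m iter N Phi z.
Proof.
elim: N z => [|N IH] z.
  by exists (fun _ => 0); split => [[]//|]; rewrite big_ord0 add0r expr0 mul1mx.
have [d [Hd Hz]] := IH (Phi z).
pose d' (j : 'I_N.+1) := match unlift ord0 j with Some k => d k | None => dig z end.
exists d'; split.
  move=> j; rewrite /d'; case: unliftP => [k _|_]; [exact: Hd | exact: (Hdec z).1].
rewrite sum_shift iterSr /d' unlift_none.
have -> : \sum_(j < N) B ^+ j *m match unlift ord0 (lift ord0 j) with Some k => d k | None => dig z end
   = \sum_(j < N) B ^+ j *m d j.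
  by apply: eq_bigr => j _; rewrite liftK.
by rewrite -Hz; exact: (Hdec z).2.
Qed.
End Exp.

Lemma int_small (F : numDomainType) (k : int) :
  - 1 < (k%:~R : F) -> (k%:~R : F) < 1 -> k = 0.
Proof.
move=> h1; rewrite ltrz1 => h2.
have {h1} h1 : -1 < k by rewrite -(ltr_int F) mulrNz.
apply/eqP; rewrite eq_le; apply/andP; split.
  by rewrite -ltzD1 /= add0r.
by rewrite -lezD1 in h1.
Qed.

Section Digits.
Variables (n : nat) (B : 'M[int]_n).
Hypothesis detB : \det B != 0.

Definition Bq := map_mx (intr : int -> rat) B.

Lemma mapB_unit (F : fieldType) (f : {rmorphism int -> F}) :
  (forall k, f k = 0 -> k = 0) -> map_mx f B \in unitmx.
Proof.
move=> finj; rewrite unitmxE det_map_mx unitfE; apply/eqP => /finj /eqP.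
by rewrite (negbTE detB).
Qed.

Lemma Bq_unit : Bq \in unitmx.
Proof. by apply: mapB_unit => k /eqP; rewrite intr_eq0 => /eqP. Qed.

Definition cq (z : 'cV[int]_n) := invmx Bq *m map_mx intr z.
Definition Phid (z : 'cV[int]_n) : 'cV[int]_n :=
  \col_i Num.floor (cq z i 0 + (2%:R)^-1).
Definition digd (z : 'cV[int]_n) := z - B *m Phid z.
Definition rq (z : 'cV[int]_n) := cq z - map_mx intr (Phid z).

Lemma digd_dec z : z = digd z + B *m Phid z.
Proof. by rewrite /digd subrK. Qed.

Lemma half_half : (2%:R : rat)^-1 + 2%:R^-1 = 1.
Proof. by rewrite [RHS](splitr (1 : rat)) mul1r. Qed.

Lemma rq_cube z i : - (2%:R)^-1 <= rq z i 0 /\ rq z i 0 < (2%:R)^-1.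
Proof.
pose x := cq z i 0.
have -> : rq z i 0 = x - (Num.floor (x + 2%:R^-1))%:~R by rewrite /rq /Phid /x !mxE.
split.
  rewrite lerBrDl addrC -lerBrDl opprK; exact: floor_le.
have := floorD1_gt (x + (2%:R)^-1).
rewrite intrD ltrBlDr -ltrBrDr => h; apply: (lt_le_trans h).
rewrite mulr1z.
set f := (Num.floor _)%:~R; set t := (2%:R)^-1.
rewrite -[X in _ + X - _]half_half -/t addrA addrK addrC; exact: lexx.
Qed.

Lemma rq_prop z : map_mx intr (digd z) = Bq *m rq z.
Proof.
rewrite /rq /cq mulmxBr mulKVmx ?Bq_unit // /digd map_mxB map_mxM.
rewrite /Bq. reflexivity.
Qed.

Lemma map_rq (F : numFieldType) z :
  map_mx (intr : int -> F) (digd z) = map_mx intr B *m map_mx ratr (rq z).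
Proof.
have -> : map_mx (intr : int -> F) B = map_mx ratr Bq.
  by rewrite /Bq -map_mx_comp; apply: eq_map_mx => k /=; rewrite ratr_int.
rewrite -map_mxM -rq_prop -map_mx_comp; apply: eq_map_mx => k /=; by rewrite ratr_int.
Qed.
End Digits.

Lemma bnd_diff (R : numDomainType) (a b h : R) : - h <= a -> a < h -> - h <= b -> b < h -> h + h = 1 ->
  - 1 < a - b /\ a - b < 1.
Proof.
move=> a1 a2 b1 b2 hh; rewrite -hh; split.
  rewrite ltrNl opprB; apply: ltr_leD => //; by rewrite lerNl.
apply: ltr_leD => //; by rewrite lerNl.
Qed.
Lemma half_halfF (F : numFieldType) : (2%:R : F)^-1 + 2%:R^-1 = 1.
Proof. by rewrite [RHS](splitr (1 : F)) mul1r. Qed.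

Section KPart.
Variables (K : numFieldType) (n : nat) (M A : 'M[K]_n) (B : 'M[int]_n).
Hypothesis HM : M \in unitmx.
Hypothesis HB : invmx M *m A *m M = map_mx intr B.
Hypothesis detB : \det B != 0.

Let iK (z : 'cV[int]_n) : 'cV[K]_n := map_mx intr z.
Let BK : 'M[K]_n := map_mx intr B.

Definition Dk (e : 'cV[int]_n) := exists c : 'cV[K]_n,
  (forall i, - (2%:R)^-1 <= c i 0 /\ c i 0 < (2%:R)^-1) /\ map_mx intr e = BK *m c.

Lemma unit_mulI m (U : 'M[K]_n) (u v : 'M[K]_(n, m)) : U \in unitmx -> U *m u = U *m v -> u = v.
Proof. by move=> H E; rewrite -(mulKmx H u) E mulKmx. Qed.

Lemma iK_inj : injective iK.
Proof.
move=> u v /matrixP H; apply/matrixP => i j; move: (H i j); rewrite !mxE; exact: intr_inj.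
Qed.

Lemma AM : A *m M = M *m BK.
Proof. by rewrite /BK -HB !mulmxA mulmxV // mul1mx. Qed.

Lemma AjM j : A ^+ j *m M = M *m BK ^+ j.
Proof.
elim: j => [|j IH]; first by rewrite !expr0 mul1mx mulmx1.
by rewrite !exprS -!mulmxE -mulmxA IH mulmxA AM mulmxA.
Qed.

Lemma mapX (j : nat) : map_mx (intr : int -> K) (B ^+ j) = BK ^+ j.
Proof.
elim: j => [|j IH]; first by rewrite !expr0 map_mx1.
by rewrite !exprS -!mulmxE map_mxM IH.
Qed.

Lemma BK_unit : BK \in unitmx.
Proof. by apply: mapB_unit => // k /eqP; rewrite intr_eq0 => /eqP. Qed.

Lemma digits_iff d : in_digits M A d <-> exists e, d = M *m iK e /\ Dk e.
Proof.
split.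
  case=> [[e He] [y [[c [Hc Hy]] Hd]]]; exists e; split => //.
  exists c; split => //; apply: (unit_mulI HM) => /=.
  rewrite -/(iK e) -He Hd Hy mulmxA AM mulmxA //.
case=> e [-> [c [Hc He]]]; split; first by exists e.
exists (M *m c); split; first by exists c.
by rewrite mulmxA AM -mulmxA -He.
Qed.

Lemma Dk_digd z : Dk (digd B z).
Proof.
exists (map_mx ratr (rq B z)); split; last by rewrite map_rq.
move=> i; rewrite mxE; have [h1 h2] := rq_cube B z i.
have E : (2%:R : K)^-1 = ratr ((2%:R : rat)^-1) by rewrite fmorphV rmorph_nat.
by rewrite E -rmorphN ler_rat ltr_rat.
Qed.

Lemma Dk_uniq e e' w w' : Dk e -> Dk e' -> e + B *m w = e' + B *m w' -> w = w'.
Proof.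
case=> c [Hc Hec] [c' [Hc' Hec']] E.
have E2 : BK *m (c + iK w) = BK *m (c' + iK w').
  rewrite !mulmxDr -Hec -Hec' /iK /BK -!map_mxM -!map_mxD; by rewrite E.
have E3 := unit_mulI BK_unit E2.
apply/matrixP => i j; rewrite (ord1 j).
have : c i 0 - c' i 0 = (w' i 0 - w i 0)%:~R.
  move/matrixP: E3 => /(_ i 0); rewrite !mxE intrB => E4.
  apply/eqP; rewrite subr_eq; apply/eqP; apply: (addIr (w i 0)%:~R).
  by rewrite E4 addrAC subrK addrC.
move=> H; apply/eqP; rewrite eq_sym -subr_eq0; apply/eqP.
have [a1 a2] := Hc i; have [b1 b2] := Hc' i.
have [h1 h2] := bnd_diff a1 a2 b1 b2 (half_halfF K).
by apply: (@int_small K); rewrite -H.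
Qed.

Lemma sumK N (e : 'I_N -> 'cV[int]_n) :
  \sum_(j < N) A ^+ j *m (M *m iK (e j)) = M *m iK (\sum_(j < N) B ^+ j *m e j).
Proof.
rewrite /iK map_mx_sum mulmx_sumr; apply: eq_bigr => j _.
by rewrite mulmxA AjM -mulmxA map_mxM mapX.
Qed.

Lemma powK N (s : 'cV[int]_n) : A ^+ N *m (M *m iK s) = M *m iK (B ^+ N *m s).
Proof. by rewrite mulmxA AjM -mulmxA /iK map_mxM mapX. Qed.

Let Hdec z : Dk (digd B z) /\ z = digd B z + B *m Phid B z :=
  conj (Dk_digd z) (digd_dec B z).

Lemma pick_digits N (d : 'I_N -> 'cV[K]_n) : (forall j, in_digits M A (d j)) ->
  exists e : 'I_N -> 'cV[int]_n, forall j, d j = M *m iK (e j) /\ Dk (e j).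
Proof.
move=> Hd; apply: (@fin_all_exists _ (fun _ => 'cV[int]_n) (fun j e => d j = M *m iK e /\ Dk e)).
move=> j; exact/digits_iff.
Qed.

Lemma exp1_iff z : expansion1 M A (M *m iK z) <-> exists N, iter N.+1 (Phid B) z = 0.
Proof.
split.
  case=> N [d [Hd Hx]]; have [e He] := pick_digits Hd.
  exists N; symmetry; apply: (exp_unique (D := Dk) Hdec Dk_uniq (d := e)).
    by move=> j; case: (He j).
  rewrite mulmx0 addr0; apply: iK_inj; apply: (unit_mulI HM).
  rewrite -sumK Hx; apply: eq_bigr => j _; by case: (He j) => ->.
case=> N HN; have [d [Hd Hz]] := exp_exists Hdec N.+1 z.
exists N, (fun j => M *m iK (d j)); split.
  by move=> j; apply/digits_iff; exists (d j).
by rewrite sumK {1}Hz HN mulmx0 addr0.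
Qed.

Lemma exp2_iff (S : seq 'cV[int]_n) z :
  expansion2 M A [seq M *m iK s | s <- S] (M *m iK z) <-> exists N, iter N (Phid B) z \in S.
Proof.
split.
  case=> N [s [d [Hs [Hd Hx]]]]; have [e He] := pick_digits Hd.
  case/mapP: Hs => s0 Hs0 Es; exists N.
  suff -> : iter N (Phid B) z = s0 by [].
  symmetry; apply: (exp_unique (D := Dk) Hdec Dk_uniq (d := e)).
    by move=> j; case: (He j).
  apply: iK_inj; apply: (unit_mulI HM).
  rewrite /iK map_mxD mulmxDr -/(iK _) -/(iK _) -sumK -powK -Es addrC Hx; congr (_ + _).
  apply: eq_bigr => j _; by case: (He j) => ->.
case=> N HN; have [d [Hd Hz]] := exp_exists Hdec N z.
exists N, (M *m iK (iter N (Phid B) z)), (fun j => M *m iK (d j)); split.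
  by apply/mapP; exists (iter N (Phid B) z).
split; first by move=> j; apply/digits_iff; exists (d j).
by rewrite sumK powK -mulmxDr /iK -map_mxD addrC -Hz.
Qed.

End KPart.

Lemma max_bound (s : seq algC) : all (fun x => (0 <= x) && (x < 1)) s ->
  exists q : algC, [/\ 0 <= q, q < 1 & all (fun x => x <= q) s].
Proof.
elim: s => [|a s IH] /=; first by move=> _; exists 0; rewrite lexx ltr01.
case/andP => /andP [a0 a1] /IH [q [q0 q1 Hq]].
have := real_leVge (ger0_real a0) (ger0_real q0); case/orP => h.
  by exists q; split => //; rewrite h.
exists a; split => //; rewrite lexx /=; apply/allP => x xs.
by apply: (le_trans _ h); move/allP: Hq => /(_ x xs).
Qed.

Section NormA.
Variables (n : nat) (B : 'M[int]_n).
Hypothesis HdB : int_dilation B.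
Let BC : 'M[algC]_n := map_mx intr B.

Lemma detB_neq0 : \det B != 0.
Proof.
apply/negP => /eqP dB.
have : \det BC == 0 by rewrite det_map_mx dB rmorph0.
case/det0P => v v0 Hv.
have : eigenvalue BC 0 by apply/eigenvalueP; exists v; rewrite // scale0r.
by move/HdB; rewrite normr0 ltr10.
Qed.

Lemma BC_unit : BC \in unitmx.
Proof. by apply: mapB_unit; [exact: detB_neq0 | move=> k /eqP; rewrite intr_eq0 => /eqP]. Qed.

Let CC := invmx BC.

Lemma eig_CC mu : eigenvalue CC mu -> `|mu| < 1.
Proof.
case/eigenvalueP => v Hv v0.
have vE : v = (v *m CC) *m BC by rewrite -mulmxA mulVmx ?BC_unit // mulmx1.
have mu0 : mu != 0.
  apply/eqP => m0; move: Hv; rewrite m0 scale0r => Hv.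
  by move: v0; rewrite vE Hv mul0mx eqxx.
have : eigenvalue BC mu^-1.
  apply/eigenvalueP; exists v => //.
  rewrite {2}vE Hv -[mu *: v *m BC]scalemxAl scalerA mulVf // scale1r //.
move/HdB; rewrite normfV invf_gt1 ?normr_gt0 //.
Qed.

Lemma trig_exists : exists P : 'M[algC]_n, P \in unitmx /\ is_trig_mx (P *m CC *m invmx P).
Proof.
case: n CC => [|n'] CC'.
  exists 1%:M; split; first exact: unitmx1.
  by apply/is_trig_mxP => -[].
have [P Pu HP] := @Schur _ n'.+1 CC' (ltn0Sn _).
exists P; have Pu' := unitarymx_unit Pu; split => //.
by move: HP; rewrite /similar_to conjumx.
Qed.

Lemma trig_diag (P : 'M[algC]_n) i : P \in unitmx -> is_trig_mx (P *m CC *m invmx P) ->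
  `|(P *m CC *m invmx P) i i| < 1.
Proof.
set T := P *m CC *m invmx P => Pu Tt.
apply: eig_CC.
have : eigenvalue T (T i i).
  rewrite eigenvalue_root_char char_poly_trig // (bigD1 i) //= rootM root_XsubC eqxx //.
case/eigenvalueP => v Hv v0; apply/eigenvalueP; exists (v *m P).
  by rewrite scalemxAl -Hv /T !mulmxA mulmxKV.
by rewrite mulmx_free_eq0 ?row_free_unit.
Qed.
End NormA.

Section NormB.
Variables (R : numFieldType) (n : nat) (T : 'M[R]_n) (q eps : R).
Hypothesis Tt : is_trig_mx T.
Hypothesis Hdiag : forall i, `|T i i| <= q.
Hypothesis eps0 : 0 <= eps.
Hypothesis eps1 : eps <= 1.

Definition wnorm (w : 'cV[R]_n) := \sum_(i < n) eps ^+ i * `|w i 0|.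
Definition tsum := \sum_i \sum_j `|T i j|.

Lemma wnorm_ge0 w : 0 <= wnorm w.
Proof. apply: sumr_ge0 => i _; apply: mulr_ge0; [exact: exprn_ge0 | exact: normr_ge0]. Qed.

Lemma wnormD u v : wnorm (u + v) <= wnorm u + wnorm v.
Proof.
rewrite /wnorm -big_split /=; apply: ler_sum => i _.
rewrite mxE -mulrDr; apply: ler_wpM2l; [exact: exprn_ge0 | exact: ler_normD].
Qed.

Lemma wnormN u : wnorm (- u) = wnorm u.
Proof. by apply: eq_bigr => i _; rewrite mxE normrN. Qed.

Lemma colsum_le j : \sum_i `|T i j| <= tsum.
Proof.
apply: ler_sum => i _; rewrite (bigD1 j) //= lerDl; apply: sumr_ge0 => *; exact: normr_ge0.
Qed.

Lemma colbound j : \sum_(i < n) eps ^+ i * `|T i j| <= eps ^+ j * (q + eps * tsum).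
Proof.
have H (i : 'I_n) : eps ^+ i * `|T i j| <= (if i == j then eps ^+ j * `|T j j| else 0) + eps ^+ j.+1 * `|T i j|.
  case: (ltngtP i j) => [lt|gt|eq].
  - have /is_trig_mxP -> := Tt; last exact: lt.
    rewrite normr0 mulr0 ifN ?add0r; last by rewrite neq_ltn lt.
    by rewrite mulr0.
  - rewrite ifN ?add0r; last by rewrite neq_ltn gt orbT.
    by apply: ler_wpM2r; [exact: normr_ge0 | apply: ler_wiXn2l].
  - have -> : i = j by apply: val_inj.
    rewrite eqxx lerDl; by apply: mulr_ge0; [apply: exprn_ge0 | apply: normr_ge0].
apply: (le_trans (ler_sum _ (fun i _ => H i))).
rewrite big_split /= (bigD1 j) //= eqxx big1 ?addr0; last by move=> i /negbTE ->.
rewrite -mulr_sumr mulrDr exprSr -mulrA; apply: lerD.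
  by apply: ler_wpM2l; [exact: exprn_ge0 | exact: Hdiag].
apply: ler_wpM2l; first exact: exprn_ge0.
by apply: ler_wpM2l => //; exact: colsum_le.
Qed.

Lemma wnorm_contr w : wnorm (T *m w) <= (q + eps * tsum) * wnorm w.
Proof.
rewrite /wnorm.
apply: (@le_trans _ _ (\sum_(i < n) \sum_(j < n) eps ^+ i * `|T i j| * `|w j 0|)).
  apply: ler_sum => i _; rewrite mxE.
  have -> : \sum_(j < n) eps ^+ i * `|T i j| * `|w j 0| = eps ^+ i * \sum_(j < n) `|T i j| * `|w j 0|.
    by rewrite mulr_sumr; apply: eq_bigr => *; rewrite mulrA.
  apply: ler_wpM2l; first exact: exprn_ge0.
  apply: (le_trans (ler_norm_sum _ _ _)); apply: ler_sum => j _; by rewrite normrM.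
rewrite exchange_big /= mulr_sumr; apply: ler_sum => j _.
rewrite -mulr_suml mulrCA mulrA; apply: ler_wpM2r; first exact: normr_ge0.
exact: colbound.
Qed.
End NormB.

Definition intbox (n m : nat) : seq 'cV[int]_n :=
  [seq \col_i ((f i : nat)%:Z - m%:Z) | f : {ffun 'I_n -> 'I_(m.*2.+1)} <- enum {ffun 'I_n -> 'I_(m.*2.+1)}].

Lemma intboxP (n m : nat) (z : 'cV[int]_n) : (forall i, (absz (z i 0%R) <= m)%N) -> z \in intbox n m.
Proof.
move=> Hz.
pose a i : int := z i 0 + m%:Z.
pose f := [ffun i => (inord (absz (a i)) : 'I_(m.*2.+1))].
have Hi i : (absz (a i))%:Z = a i /\ (absz (a i) < m.*2.+1)%N.
  have := Hz i; rewrite -(lez_nat) abszE ler_norml => /andP [h1 h2].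
  have h0 : 0 <= a i by rewrite /a -lerBlDr sub0r.
  rewrite gez0_abs //; split => //.
  by rewrite ltnS -(lez_nat) gez0_abs // -addnn PoszD /a lerD2r.
have -> : z = \col_i ((f i : nat)%:Z - m%:Z).
  apply/matrixP => i j; rewrite (ord1 j) !mxE ffunE inordK; last exact: (Hi i).2.
  by rewrite (Hi i).1 /a addrK.
by apply: map_f; rewrite mem_enum.
Qed.

Section NormC.
Variables (n : nat) (B : 'M[int]_n) (P : 'M[algC]_n) (q eps : algC).
Let BC : 'M[algC]_n := map_mx intr B.
Let CC := invmx BC.
Let T := P *m CC *m invmx P.
Hypothesis detB : \det B != 0.
Hypothesis Pu : P \in unitmx.
Hypothesis Tt : is_trig_mx T.
Hypothesis Hdiag : forall i, `|T i i| <= q.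
Hypothesis q0 : 0 <= q.
Hypothesis eps0 : 0 < eps.
Hypothesis eps1 : eps <= 1.
Let a := q + eps * tsum T.
Hypothesis a1 : a < 1.

Let BCu : BC \in unitmx.
Proof. by apply: mapB_unit => // k /eqP; rewrite intr_eq0 => /eqP. Qed.

Lemma a0 : 0 <= a.
Proof.
apply: addr_ge0 => //; apply: mulr_ge0; first exact: ltW.
by apply: sumr_ge0 => i _; apply: sumr_ge0 => j _; exact: normr_ge0.
Qed.

Definition Nv (v : 'cV[algC]_n) := wnorm eps (P *m v).

Lemma Nv_ge0 v : 0 <= Nv v.
Proof. exact/wnorm_ge0/ltW. Qed.

Lemma Nv_contr v : Nv (CC *m v) <= a * Nv v.
Proof.
rewrite /Nv.
have -> : P *m (CC *m v) = T *m (P *m v) by rewrite /T !mulmxA mulmxKV.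
exact: (wnorm_contr Tt Hdiag (ltW eps0) eps1).
Qed.

Lemma Nv_sub u v : Nv (u - v) <= Nv u + Nv v.
Proof. by rewrite /Nv mulmxBr; apply: (le_trans (wnormD (ltW eps0) (P *m u) (- (P *m v)))); rewrite wnormN. Qed.

Definition Rd := \sum_(i < n) \sum_(j < n) `|(P *m BC) i j|.

Lemma Rd_ge0 : 0 <= Rd.
Proof. by apply: sumr_ge0 => i _; apply: sumr_ge0 => j _; exact: normr_ge0. Qed.

Lemma Nv_dig z : Nv (map_mx intr (digd B z)) <= Rd.
Proof.
rewrite /Nv map_rq // mulmxA /wnorm /Rd; apply: ler_sum => i _.
rewrite mxE; apply: (@le_trans _ _ (\sum_(j < n) `|(P *m BC) i j| * `|(map_mx ratr (rq B z)) j 0|)).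
  rewrite -[X in _ <= X]mul1r; apply: ler_pM; [exact: exprn_ge0 (ltW eps0) | exact: normr_ge0 | | ].
    exact: exprn_ile1 (ltW eps0) eps1.
  apply: (le_trans (ler_norm_sum _ _ _)); apply: ler_sum => j _; by rewrite normrM.
apply: ler_sum => j _; rewrite -[X in _ <= X]mulr1; apply: ler_wpM2l; first exact: normr_ge0.
rewrite mxE -ratr_norm -(rmorph1 ratr) ler_rat.
have [h1 h2] := rq_cube B z j; rewrite ler_norml; apply/andP; split.
  apply: le_trans h1; rewrite lerN2 invf_le1 ?ltr0n // ler1n //.
apply: (le_trans (ltW h2)); rewrite invf_le1 ?ltr0n // ler1n //.
Qed.

Lemma Phi_eq z : map_mx intr (Phid B z) = CC *m (map_mx intr z - map_mx intr (digd B z)).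
Proof.
have E : z - digd B z = B *m Phid B z by rewrite {1}(digd_dec B z) addrC addKr.
by rewrite -map_mxB E map_mxM mulKmx.
Qed.

Definition nu (z : 'cV[int]_n) := Nv (map_mx intr z).

Lemma nu_step z : nu (Phid B z) <= a * (nu z + Rd).
Proof.
rewrite /nu Phi_eq; apply: (le_trans (Nv_contr _)); apply: ler_wpM2l; first exact: a0.
apply: (le_trans (Nv_sub _ _)); apply: lerD => //; exact: Nv_dig.
Qed.
Definition L := a * Rd / (1 - a).

Lemma a1' : 1 - a != 0.
Proof. by rewrite subr_eq0 gt_eqF. Qed.

Lemma L_ge0 : 0 <= L.
Proof. by rewrite /L divr_ge0 ?mulr_ge0 ?a0 ?Rd_ge0 // subr_ge0 ltW. Qed.

Lemma hL : (1 - a) * L = a * Rd.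
Proof. by rewrite /L mulrC divfK // a1'. Qed.

Lemma step_bound y Tb : L <= Tb -> nu y <= Tb -> nu (Phid B y) <= Tb.
Proof.
move=> LT yT; apply: (le_trans (nu_step y)).
apply: (@le_trans _ _ (a * (Tb + Rd))).
  by apply: ler_wpM2l; [exact: a0 | rewrite lerD2r].
rewrite mulrDr -hL.
apply: (@le_trans _ _ (a * Tb + (1 - a) * Tb)).
  by rewrite lerD2l; apply: ler_wpM2l => //; rewrite subr_ge0 ltW.
by rewrite -mulrDl addrC subrK mul1r.
Qed.

Lemma orbit_bound z k : nu (iter k (Phid B) z) <= nu z + L.
Proof.
elim: k => [|k IH] /=; first by rewrite lerDl L_ge0.
apply: step_bound => //; rewrite lerDr; exact: Nv_ge0.
Qed.

Lemma step_contr y : nu (Phid B y) - L <= a * (nu y - L).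
Proof.
rewrite mulrBr lerBlDr.
have <- : a * (nu y + Rd) = a * nu y - a * L + L.
  by rewrite mulrDr -hL mulrBl mul1r [L - _]addrC addrA.
exact: nu_step.
Qed.

Lemma per_bound p m : (0 < m)%N -> iter m (Phid B) p = p -> nu p <= L.
Proof.
move=> m0 Hm.
have H k : nu (iter k (Phid B) p) - L <= a ^+ k * (nu p - L).
  elim: k => [|k IH]; first by rewrite expr0 mul1r.
  rewrite iterS; apply: (le_trans (step_contr _)).
  by rewrite exprS -mulrA; apply: ler_wpM2l; [exact: a0 | exact: IH].
move: (H m); rewrite Hm -subr_le0 -{1}[nu p - L]mul1r -mulrBl mulrC.
rewrite pmulr_lle0 ?subr_le0 // subr_gt0 exprn_ilt1 ?a0 //.
by rewrite -lt0n.
Qed.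

Definition Gc := \sum_(i < n) \sum_(j < n) `|invmx P i j| / eps ^+ j.

Lemma coord_bound (z : 'cV[int]_n) (i : 'I_n) : `|(z i 0)%:~R : algC| <= Gc * nu z.
Proof.
have E : map_mx intr z = invmx P *m (P *m map_mx intr z) by rewrite mulKmx.
set w := P *m map_mx intr z in E.
have Hw j : `|w j 0| <= nu z / eps ^+ j.
  rewrite ler_pdivlMr ?exprn_gt0 // /nu /Nv -/w /wnorm (bigD1 j) //= mulrC lerDl.
  by apply: sumr_ge0 => k _; apply: mulr_ge0; [exact: exprn_ge0 (ltW eps0) | exact: normr_ge0].
have -> : (z i 0)%:~R = (map_mx (intr : int -> algC) z) i 0 by rewrite mxE.
rewrite E mxE; apply: (le_trans (ler_norm_sum _ _ _)).
apply: (@le_trans _ _ ((\sum_(j < n) `|invmx P i j| / eps ^+ j) * nu z)).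
  rewrite mulr_suml; apply: ler_sum => j _; rewrite normrM -mulrA [_^-1 * _]mulrC.
  by apply: ler_wpM2l; [exact: normr_ge0 | exact: Hw].
apply: ler_wpM2r; first exact: Nv_ge0.
rewrite /Gc [X in _ <= X](bigD1 i) //= lerDl; apply: sumr_ge0 => k _; apply: sumr_ge0 => j _.
by apply: divr_ge0; [exact: normr_ge0 | exact: exprn_ge0 (ltW eps0)].
Qed.

Lemma Gc_ge0 : 0 <= Gc.
Proof.
apply: sumr_ge0 => k _; apply: sumr_ge0 => j _.
by apply: divr_ge0; [exact: normr_ge0 | exact: exprn_ge0 (ltW eps0)].
Qed.

Lemma box_bound Tb : 0 <= Tb -> exists s : seq 'cV[int]_n, forall z, nu z <= Tb -> z \in s.
Proof.
move=> T0; exists (intbox n (Num.bound (Gc * Tb))) => z Hz; apply: intboxP => i.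
have h := archi_boundP (mulr_ge0 Gc_ge0 T0).
have h2 : `|(z i 0)%:~R : algC| < (Num.bound (Gc * Tb))%:R.
  apply: le_lt_trans h; apply: (le_trans (coord_bound z i)); apply: ler_wpM2l => //; exact: Gc_ge0.
apply: ltnW; move: h2; rewrite -intr_norm -abszE -pmulrn ltr_nat //.
Qed.
End NormC.

Lemma norm_part n (B : 'M[int]_n) : int_dilation B ->
  \det B != 0 /\ (forall z, exists s : seq 'cV[int]_n, forall k, iter k (Phid B) z \in s) /\
  (exists P : seq 'cV[int]_n, forall p m, (0 < m)%N -> iter m (Phid B) p = p -> p \in P).
Proof.
move=> HdB; have detB := detB_neq0 HdB.
have [P [Pu Tt]] := trig_exists B.
set T := P *m _ *m invmx P in Tt.
have Hd i : `|T i i| < 1 := trig_diag HdB i Pu Tt.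
have Hall : all (fun x => (0 <= x) && (x < 1)) [seq `|T i i| | i <- enum 'I_n].
  by apply/allP => x /mapP [i _ ->]; rewrite normr_ge0 Hd.
have [q [q0 q1 Hq]] := max_bound Hall.
have Hdiag i : `|T i i| <= q.
  by move/allP: Hq; apply; apply: map_f; rewrite mem_enum.
pose s := tsum T; pose d := 1 - q; pose eps := (d / 2%:R) / (1 + s).
have s0 : 0 <= s by apply: sumr_ge0 => i _; apply: sumr_ge0 => j _; exact: normr_ge0.
have d0 : 0 < d by rewrite subr_gt0.
have d20 : 0 < d / 2%:R by rewrite divr_gt0 ?ltr0n.
have s1 : 1 <= 1 + s by rewrite lerDl.
have s1' : 0 < 1 + s by apply: lt_le_trans s1.
have eps0 : 0 < eps by rewrite divr_gt0.
have hE : eps * (1 + s) = d / 2%:R by rewrite /eps divfK // gt_eqF.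
have dd : d / 2%:R < d by rewrite [X in _ < X](splitr d) ltrDl.
have d1 : d <= 1 by rewrite /d lerBlDr lerDl.
have eps1 : eps <= 1.
  apply: (le_trans (ler_peMr (ltW eps0) s1)); rewrite hE.
  exact: le_trans (ltW dd) d1.
have a1 : q + eps * s < 1.
  apply: (@le_lt_trans _ _ (q + d / 2%:R)).
    rewrite lerD2l -hE; apply: ler_wpM2l; [exact: ltW | by rewrite lerDr].
  apply: (@lt_le_trans _ _ (q + d)); first by rewrite ltrD2l.
  by rewrite /d addrC subrK.
split => //; split.
  move=> z.
  have L0 := L_ge0 (B := B) (P := P) q0 eps0 a1.
  have [s' Hs'] := box_bound Pu eps0 (addr_ge0 (Nv_ge0 P eps0 (map_mx intr z)) L0).
  exists s' => k; apply: Hs'; exact: (orbit_bound detB Pu Tt Hdiag q0 eps0 eps1 a1).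
have L0 := L_ge0 (B := B) (P := P) q0 eps0 a1.
have [s' Hs'] := box_bound Pu eps0 L0.
exists s' => p m m0 Hm; apply: Hs'; exact: (per_bound detB Pu Tt Hdiag q0 eps0 eps1 a1 m0 Hm).
Qed.

Unset Implicit Arguments.


Theorem mainTheorem9 (K : numFieldType) (n : nat) (M A : 'M[K]_n) :
  M \in unitmx -> dilation_for M A ->
  exists S : seq 'cV[K]_n,
    (forall s, s \in S -> in_lattice M s) /\
    forall x : 'cV[K]_n, in_lattice M x ->
      (expansion1 M A x /\ ~ expansion2 M A S x) \/
      (~ expansion1 M A x /\ expansion2 M A S x).
Proof.
move=> HM [B [HdB HB]]; have [detB [Horb Hper]] := norm_part HdB.
have Phi0 : Phid B 0 = 0.
  apply: (Dk_uniq (K := K) detB (e := digd B 0) (e' := 0)).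
  - exact: Dk_digd.
  - by exists 0; split => [i|]; rewrite ?mxE ?mulmx0 ?map_mx0 // oppr_le0 invr_ge0 ler0n invr_gt0 ltr0n.
  by rewrite -digd_dec mulmx0 addr0.
have [S HS] := dyn_main Phi0 Horb Hper.
exists [seq M *m map_mx intr s | s <- S]; split.
  by move=> s /mapP [s0 _ ->]; exists s0.
move=> x [z ->].
have E1 := exp1_iff HM HB detB z; have E2 := exp2_iff HM HB detB S z.
case: (HS z) => [[h1 h2]|[h1 h2]]; [left|right]; split.
- exact/E1.
- by move/E2.
- by move/E1.
- exact/E2.
Qed.
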